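(* For integers $t\ge 1$ and $m>t$ (with $m$ sufficiently large) and a fixed integer constant $c\ge 3$, there exists a binary $t$-break-resilient code $\mathcal{C}\subseteq\{0,1\}^n$ of length $n=m+(6+2\log\log m)\cdot 3c\log m\cdot t+c\log m$ with $\log|\mathcal{C}|\ge m-o(1)$; consequently its redundancy satisfies $n-\log|\mathcal{C}|=O(t\log n\log\log n)$.
   Context: Logarithms are base 2. Breaking a binary string $\mathbf{x}\in\{0,1\}^n$ at $s\le t$ positions means choosing $s$ cut points between consecutive entries, producing $s+1$ consecutive substrings called fragments; fragments are oriented (read left to right as in $\mathbf{x}$) but given to the decoder as an unordered multiset. A code $\mathcal{C}\subseteq\{0,1\}^n$ is a $t$-break-resilient code ($t$-BRC) if every codeword can be uniquely recovered from the unordered multiset of fragments resulting from any at most $t$ breaks (equivalently, no two distinct codewords, each broken at at most $t$ positions, yield the same fragment multiset). The redundancy of $\mathcal{C}$ is $n-\log|\mathcal{C}|$. *)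

(* Defs.v *)
From mathcomp Require Import all_boot.
From Stdlib Require Import Reals.
Set Implicit Arguments. Unset Strict Implicit. Unset Printing Implicit Defensive.

(* fs is a way of breaking x at at most t positions: the fragments are the
   nonempty consecutive substrings (in order) whose concatenation is x, and
   there are at most t+1 of them (s <= t cut points give s+1 fragments). *)
Definition breaking (t : nat) (x : seq bool) (fs : seq (seq bool)) : bool :=
  [&& all (fun f => f != [::]) fs, flatten fs == x,
      0 < size fs & size fs <= t.+1].

Definition is_tBRC (n t : nat) (C : {set n.-tuple bool}) : Prop :=
  forall x y : n.-tuple bool, x \in C -> y \in C ->
  forall fs gs : seq (seq bool),
    breaking t (val x) fs -> breaking t (val y) gs -> perm_eq fs gs -> x = y.

Definition log2 (x : R) : R := (ln x / ln 2)%R.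

(* integer version of log m: ceil(log2 m) *)
Definition lg (m : nat) : nat := up_log 2 m.

Definition brc_len (c t m : nat) : nat :=
  m + (6 + 2 * lg (lg m)) * (3 * c * lg m) * t + c * lg m.

(* Main.v *)
Require Import Defs.
From mathcomp Require Import all_boot.
From Stdlib Require Import Reals ClassicalEpsilon.
From mathcomp Require Import zify.
Import ssrnat.
Local Set Warnings "-notation-overridden".
From Stdlib Require Import Lra.

Lemma greedy (T : finType) (E : rel T) (D : nat) :
  (forall x y, E x y = E y x) ->
  (forall x, #|[set y | E x y]| <= D) ->
  forall A : {set T}, exists C : {set T},
    (forall x y, x \in C -> y \in C -> x != y -> ~~ E x y) /\ #|A| <= #|C| * D.+1.
Proof.
move=> Hsym HD.
suff H: forall n (A : {set T}), #|A| <= n -> exists C : {set T},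
    C \subset A /\ (forall x y, x \in C -> y \in C -> x != y -> ~~ E x y) /\ #|A| <= #|C| * D.+1.
  by move=> A; have [C [_ HC]] := H _ A (leqnn _); exists C.
elim=> [|n IH] A hA.
  exists set0; split; first exact: sub0set.
  by split=> [x y|]; rewrite ?in_set0 // cards0 mul0n.
have [->|[x xA]] := set_0Vmem A.
  exists set0; split; first exact: sub0set.
  by split=> [x y|]; rewrite ?in_set0 // cards0 mul0n.
pose B := x |: [set y | E x y].
pose A' := A :\: B.
have hA' : #|A'| <= n.
  have: #|A'| < #|A|.
    apply: proper_card; apply/properP; split; first exact: subsetDl.
    exists x => //; rewrite /A' /B. by rewrite in_setD setU11.
  by move=> h; lia.
have [C' [sC' [iC' cC']]] := IH A' hA'.
have xC' : x \notin C'.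
  by apply/negP=> /(subsetP sC'); rewrite /A' /B !inE eqxx.
exists (x |: C'); split.
  apply/subsetP=> y; rewrite !inE => /orP[/eqP->//|/(subsetP sC')].
  by rewrite /A' !inE => /andP[].
split.
  have nb: forall y, y \in C' -> ~~ E x y.
    by move=> y /(subsetP sC'); rewrite /A' /B !inE negb_or => /andP[/andP[_ ->]].
  move=> y z; rewrite !inE => /orP[/eqP->|yC] /orP[/eqP->|zC].
  - by rewrite eqxx.
  - by move=> _; apply: nb.
  - by move=> _; rewrite Hsym; apply: nb.
  - exact: iC'.
rewrite cardsU1 xC' add1n mulSn.
have hB : #|B| <= D.+1 by rewrite /B cardsU1; have := HD x; case: (_ \notin _) => /= h; lia.
have: #|A| <= #|A'| + #|B|.
  apply: leq_trans (leq_card_setU _ _).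
  apply: subset_leq_card; apply/subsetP=> y yA.
  by rewrite /A' !inE yA; case: (y == x); case: (E x y).
by move=> h; lia.
Qed.

Definition conf t {n} (x y : n.-tuple bool) : Prop :=
  exists fs gs, breaking t (val x) fs /\ breaking t (val y) gs /\ perm_eq fs gs.

Definition confb t {n} (x y : n.-tuple bool) : bool :=
  if excluded_middle_informative (conf t x y) then true else false.

Lemma confbP t n (x y : n.-tuple bool) : confb t x y <-> conf t x y.
Proof. by rewrite /confb; case: excluded_middle_informative. Qed.

Lemma confb_sym t n (x y : n.-tuple bool) : confb t x y = confb t y x.
Proof.
apply/idP/idP => /confbP [fs [gs [h1 [h2 h3]]]]; apply/confbP;
  by exists gs, fs; rewrite perm_sym.
Qed.

Lemma frag_infix (x g : seq bool) fs : flatten fs = x -> g \in fs -> infix g x.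
Proof.
move=> <- /splitPr [fs1 fs2]; rewrite flatten_cat /=.
exact: infix_infix.
Qed.

Definition desc n t (x : seq bool) (d : {ffun 'I_t.+1 -> 'I_n.+1 * 'I_n.+1}) :=
  flatten [seq take (d i).2 (drop (d i).1 x) | i <- enum 'I_t.+1].

Lemma flatten_nil_tail (gs : seq (seq bool)) k m : size gs <= k ->
  flatten [seq nth [::] gs i | i <- iota k m] = [::].
Proof.
elim: m k => [|m IH] k hk //=.
by rewrite nth_default // IH // ltnW.
Qed.

Lemma desc_ok n t (x : seq bool) (gs : seq (seq bool)) :
  (forall g, g \in gs -> infix g x) -> size gs <= t.+1 -> size x = n ->
  exists d, desc n t x d = flatten gs.
Proof.
move=> hin hs hx.
pose g (i : 'I_t.+1) := nth [::] gs i.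
have hg : forall i, infix (g i) x.
  move=> i; rewrite /g; case: (ltnP i (size gs)) => hi.
    by apply: hin; apply: mem_nth.
  by rewrite nth_default // infix0s.
exists [ffun i => (inord (infix_index (g i) x), inord (size (g i)))].
rewrite /desc.
have -> : [seq take ([ffun i => (inord (infix_index (g i) x) : 'I_n.+1,
                                  inord (size (g i)) : 'I_n.+1)] i).2
            (drop ([ffun i => (inord (infix_index (g i) x) : 'I_n.+1,
                                  inord (size (g i)) : 'I_n.+1)] i).1 x) | i <- enum 'I_t.+1]
          = [seq nth [::] gs i | i <- map val (enum 'I_t.+1)].
  rewrite -map_comp; apply: eq_map => i /=; rewrite ffunE /=.
  have h1 : infix_index (g i) x <= n by rewrite -hx infixTindex.
  have h2 : size (g i) <= n by rewrite -hx size_infix.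
  rewrite !inordK ?ltnS //.
  by have := hg i; rewrite infixE => /eqP.
rewrite val_enum_ord -(subnKC hs) iotaD map_cat flatten_cat add0n.
rewrite (@flatten_nil_tail gs (size gs)) // cats0.
by have := mkseq_nth [::] gs; rewrite /mkseq => ->.
Qed.

Lemma nbr_card t n (x : n.-tuple bool) :
  #|[set y | confb t x y]| <= (n.+1 * n.+1) ^ t.+1.
Proof.
pose f (d : {ffun 'I_t.+1 -> 'I_n.+1 * 'I_n.+1}) : n.-tuple bool :=
  insubd x (desc n t (val x) d).
apply: (@leq_trans #|[set f d | d in {ffun 'I_t.+1 -> 'I_n.+1 * 'I_n.+1}]|).
  apply: subset_leq_card; apply/subsetP => y; rewrite inE => /confbP.
  move=> [fs [gs [hf [hg hp]]]].
  move: hf hg => /and4P [_ /eqP hf _ _] /and4P [_ /eqP hg _ hsz].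
  have hin : forall g, g \in gs -> infix g (val x).
    by move=> g gin; apply: (@frag_infix (val x) g fs hf); rewrite (perm_mem hp).
  have [d hd] := @desc_ok n t (val x) gs hin hsz (size_tuple x).
  apply/imsetP; exists d => //.
  apply: val_inj; rewrite /f insubdK; first by rewrite hd hg.
  by rewrite -topredE /= hd hg size_tuple.
apply: leq_trans (leq_imset_card _ _) _.
by rewrite cardE -cardE card_ffun card_prod !card_ord.
Qed.

Lemma cube_le_pow a : 10 <= a -> a ^ 3 <= 2 ^ a.
Proof.
elim: a => [|a IH] //.
rewrite leq_eqVlt => /orP[/eqP <- //|]; rewrite ltnS => ha.
have h := IH ha; rewrite (expnS 2 a).
have h2 : (a.+1) ^ 3 <= 2 * a ^ 3.
  rewrite !expnS expn0; nia.
apply: leq_trans h2 _; rewrite leq_mul2l; exact: h.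
Qed.

Lemma numeric (c t : nat) : 3 <= c -> 1 <= t ->
  exists M, forall m, M <= m ->
  2 ^ m * (((brc_len c t m).+1 * (brc_len c t m).+1) ^ t.+1).+1 <= 2 ^ brc_len c t m
  /\ 4 <= m.
Proof.
move=> hc ht.
pose A0 := 25 * c * t + 11.
exists (2 ^ A0) => m hm.
have h4 : 4 <= 2 ^ A0.
  by apply: leq_trans (_ : 2 ^ 2 <= 2 ^ A0); rewrite // leq_exp2l // /A0; lia.
split; last by lia.
set a := lg m.
have ma : m <= 2 ^ a by apply: up_logP.
have aA : A0 <= a by rewrite -(@leq_exp2l 2) //; apply: leq_trans hm ma.
have laa : lg a <= a by apply: up_log_min => //; apply: ltnW; apply: ltn_expl.
pose r := (6 + 2 * lg a) * (3 * c * a) * t + c * a.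
have hN : brc_len c t m = m + r by rewrite /brc_len /r addnA.
have r_lo : 54 * a * t <= r by rewrite /r; nia.
have r_hi : r <= 25 * c * t * a ^ 2.
  rewrite /r expnS expn1; have : 1 <= a by rewrite /A0 in aA; lia. nia.
have hcube : a ^ 3 <= 2 ^ a by apply: cube_le_pow; rewrite /A0 in aA; lia.
have ha3 : 25 * c * t * a ^ 2 + 1 <= 2 ^ a.
  apply: leq_trans hcube.
  rewrite /A0 in aA. rewrite !expnS expn0. nia.
have hN1 : (brc_len c t m).+1 <= 2 ^ a.+1 by rewrite hN expnS; lia.
have : ((brc_len c t m).+1 * (brc_len c t m).+1) ^ t.+1 <= 2 ^ (8 * a * t).
  apply: leq_trans (_ : (2 ^ a.+1 * 2 ^ a.+1) ^ t.+1 <= _).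
    by rewrite leq_exp2r //; apply: leq_mul.
  rewrite -expnD -expnM leq_exp2l //; rewrite /A0 in aA; nia.
move=> hD.
have : 2 ^ (8 * a * t) < 2 ^ r.
  by rewrite ltn_exp2l //; rewrite /A0 in aA; nia.
move=> hr.
rewrite hN in hD *; rewrite expnD leq_mul2l; apply/orP; right; lia.
Qed.

Lemma INR_muln m n : INR (m * n) = (INR m * INR n)%R.
Proof. by rewrite -multE mult_INR. Qed.

Lemma INR_expn m n : INR (m ^ n) = (INR m ^ n)%R.
Proof.
elim: n => [|n IH]; first by rewrite expn0.
by rewrite expnS INR_muln IH.
Qed.

Lemma INR_leq m n : m <= n -> (INR m <= INR n)%R.
Proof. by move/leP; apply: le_INR. Qed.

Open Scope R_scope.

Lemma real_part (S D1 N m t : nat) :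
  (1 <= INR t) -> (4 <= INR N) ->
  2 ^ m <= INR S -> 2 ^ N <= INR S * INR D1 ->
  INR D1 <= (2 * INR N) ^ (2 * t + 2) ->
  INR m - 0 <= log2 (INR S) /\
  INR N - log2 (INR S) <= 8 * INR t * log2 (INR N) * log2 (log2 (INR N)).
Proof.
move=> ht hN hS hC hD.
have l2 : 0 < ln 2 by rewrite -ln_1; apply: ln_increasing; lra.
have p2m : 0 < 2 ^ m by apply: pow_lt; lra.
have Spos : 0 < INR S by lra.
have D1pos : 0 < INR D1.
  have p2N : 0 < 2 ^ N by apply: pow_lt; lra.
  case: (Rle_lt_dec (INR D1) 0) => h //.
  have : INR S * INR D1 <= 0.
    have := pos_INR D1; nra.
  lra.
set lS := ln (INR S).
set L := log2 (INR N).
have eS : lS = log2 (INR S) * ln 2 by rewrite /lS /log2; field; lra.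
have eL : ln (INR N) = L * ln 2 by rewrite /L /log2; field; lra.
split.
  have h1 : ln (2 ^ m) <= lS.
    rewrite /lS; case: (Req_dec (2 ^ m) (INR S)) => [->|hne]; first lra.
    by apply: Rlt_le; apply: ln_increasing; lra.
  rewrite ln_pow in h1; last lra.
  rewrite eS in h1. nra.
have h2 : INR N * ln 2 <= lS + ln (INR D1).
  rewrite -ln_pow; last lra.
  rewrite /lS -ln_mult //.
  case: (Req_dec (2 ^ N) (INR S * INR D1)) => [->|hne]; first lra.
  by apply: Rlt_le; apply: ln_increasing; [apply: pow_lt; lra| lra].
have h3 : ln (INR D1) <= INR (2 * t + 2) * (ln 2 + ln (INR N)).
  rewrite -ln_mult; try lra.
  rewrite -ln_pow; last lra.
  case: (Req_dec (INR D1) ((2 * INR N) ^ (2 * t + 2))) => [->|hne]; first lra.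
  by apply: Rlt_le; apply: ln_increasing; lra.
have h4 : INR (2 * t + 2) = 2 * INR t + 2.
  by rewrite plus_INR mult_INR /=; ring.
have hL : 2 <= L.
  have : ln 4 <= ln (INR N).
    case: (Req_dec 4 (INR N)) => [->|hne]; first lra.
    by apply: Rlt_le; apply: ln_increasing; lra.
  have -> : ln 4 = 2 * ln 2 by rewrite (_ : 4 = 2 * 2); [rewrite ln_mult; lra | lra].
  rewrite eL; nra.
have hLL : 1 <= log2 L.
  have : ln 2 <= ln L.
    case: (Req_dec 2 L) => [->|hne]; first lra.
    by apply: Rlt_le; apply: ln_increasing; lra.
  rewrite /log2 => h.
  apply: (Rmult_le_reg_r (ln 2)) => //.
  rewrite /Rdiv Rmult_assoc Rinv_l; lra.
rewrite h4 eL eS in h3 h2.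
set q := log2 (INR S) in h2 *.
set LL := log2 L in hLL *.
have h5 : INR N - q <= (2 * INR t + 2) * (1 + L) by nra.
have h6 : (2 * INR t + 2) * (1 + L) <= 8 * INR t * L by nra.
have h7 : 8 * INR t * L <= 8 * INR t * L * LL by nra.
lra.
Qed.
Close Scope R_scope.

Theorem corollary1 (c : nat) (hc : 3 <= c) :
  exists K : R,
  forall t : nat, 1 <= t ->
  exists eps : nat -> R, Un_cv eps 0%R /\
  exists M : nat, forall m : nat, M <= m -> t < m ->
  exists C : {set (brc_len c t m).-tuple bool},
    is_tBRC t C /\
    (INR m - eps m <= log2 (INR #|C|))%R /\
    (INR (brc_len c t m) - log2 (INR #|C|)
       <= K * INR t * log2 (INR (brc_len c t m))
            * log2 (log2 (INR (brc_len c t m))))%R.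
Proof.
exists 8%R => t ht.
exists (fun _ => 0%R); split.
  move=> e he; exists 0 => k _; rewrite /R_dist Rminus_0_r Rabs_R0; lra.
have [M HM] := @numeric c t hc ht.
exists M => m hm htm.
have [h1 h4] := HM m hm.
set N := brc_len c t m in h1 *.
set D := ((N.+1 * N.+1) ^ t.+1) in h1 *.
have [C [iC cC]] := @greedy _ (@confb t N) D (@confb_sym t N) (@nbr_card t N) setT.
rewrite cardsT card_tuple card_bool in cC.
exists C; split.
  move=> x y xC yC fs gs hf hg hp.
  case: (eqVneq x y) => // hxy.
  have := iC x y xC yC hxy.
  have -> // : confb t x y by apply/confbP; exists fs, gs.
have hS : 2 ^ m <= #|C|.
  rewrite -(@leq_pmul2r D.+1) //; exact: leq_trans h1 cC.
have hN4 : 4 <= N by rewrite /N /brc_len; lia.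
have hDn : D.+1 <= (N.*2) ^ (2 * t + 2).
  rewrite (_ : 2 * t + 2 = 2 * t.+1); last by lia.
  rewrite expnM -mulnn.
  apply: leq_trans (_ : (N.+2 * N.+2) ^ t.+1 <= _).
    by rewrite ltn_exp2r //; apply: ltn_mul.
  by rewrite leq_exp2r //; apply: leq_mul; lia.
have e2 : INR 2 = 2%R by simpl; lra.
have e4 : INR 4 = 4%R by simpl; lra.
apply: (@real_part #|C| D.+1 N m t).
- by have := @INR_leq _ _ ht.
- by have := @INR_leq _ _ hN4; rewrite e4.
- by have := @INR_leq _ _ hS; rewrite INR_expn e2.
- by have := @INR_leq _ _ cC; rewrite INR_expn INR_muln e2.
- by have := @INR_leq _ _ hDn; rewrite INR_expn -muln2 INR_muln e2 Rmult_comm.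
Qed.
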